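(* Let $n$ be a positive integer and $p$ an odd prime. If $n$ is divisible by $4$, then the lists \[ \binom{n}{0}, \binom{n}{2}, \ldots, \binom{n}{n/2-2} \quad\text{and}\quad \binom{n}{1}, \binom{n}{3}, \ldots, \binom{n}{n/2-1} \] have the same number of elements divisible by $p$. If $n \equiv 2 \bmod 4$, then the lists \[ \binom{n}{0}, \binom{n}{2}, \ldots, \binom{n}{n/2-1} \quad\text{and}\quad \binom{n}{1}, \binom{n}{3}, \ldots, \binom{n}{n/2-2}, \binom{n}{n/2} \] have the same number of elements divisible by $p$. *)

(* Defs.v *)
From mathcomp Require Import all_boot.
Set Implicit Arguments. Unset Strict Implicit. Unset Printing Implicit Defensive.

Definition cnt_div (p n m : nat) (par : bool) : nat :=
  count (fun k => (odd k == par) && (p %| 'C(n, k))) (iota 0 m.+1).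

(* Main.v *)
Require Import Defs.
From mathcomp Require Import all_boot.
From mathcomp Require Import all_algebra zify.
Set Implicit Arguments. Unset Strict Implicit. Unset Printing Implicit Defensive.
Section Lucas.
Import GRing.Theory.
Local Open Scope ring_scope.

Lemma coef_binom (R : comNzRingType) n k :
  ((('X + 1) ^+ n : {poly R})`_k) = ('C(n, k))%:R.
Proof.
elim: n k => [|n IH] k.
  by rewrite expr0 coef1 bin0n; case: (k == 0%N).
rewrite exprSr mulrDr mulr1 coefD coefMX IH.
case: k => [|k] /=; first by rewrite add0r IH !bin0.
by rewrite IH binS natrD addrC.
Qed.

Lemma comp_binom (R : comNzRingType) a m :
  (('X + 1) ^+ a : {poly R}) \Po 'X^m = ('X^m + 1) ^+ a.
Proof.
elim: a => [|a IH]; first by rewrite !expr0 comp_polyC.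
by rewrite !exprSr comp_polyM IH comp_polyD comp_polyX comp_polyC.
Qed.

Lemma lucasF (p a b c d : nat) : prime p -> (b < p)%N -> (d < p)%N ->
  ('C(p * a + b, p * c + d))%:R = ('C(a, c))%:R * ('C(b, d))%:R :> 'F_p.
Proof.
move=> pP bp dp.
have p0 : (0 < p)%N by apply: prime_gt0.
have chP : p \in [pchar {poly 'F_p}] by rewrite pchar_poly pchar_Fp.
have frob : ('X + 1) ^+ p = ('X^p + 1 : {poly 'F_p}).
  by rewrite exprDn_pchar ?expr1n // pnatE.
rewrite -coef_binom exprD exprM frob -(comp_binom _ a p) coefM.
have hlt : (p * c < (p * c + d).+1)%N by rewrite ltnS leq_addr.
rewrite (bigD1 (Ordinal hlt)) //=.
rewrite big1 ?addr0.
  rewrite coef_comp_poly_Xn // dvdn_mulr // mulKn // coef_binom addKn coef_binom.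
  by [].
move=> [j hj] /= hne.
rewrite coef_comp_poly_Xn //.
case: ifP => hdiv; last by rewrite mul0r.
rewrite [X in _ * X]coef_binom bin_small ?mulr0 //.
move: hne; rewrite -val_eqE /= => hne.
move/dvdnP: hdiv hj hne => [j' ->] hj hne.
have hne' : j' != c.
  by apply: contra hne => /eqP ->; rewrite mulnC.
have h1 : (p * j' < p * c.+1)%N by rewrite mulnS; lia.
rewrite ltn_pmul2l // ltnS leq_eqVlt (negbTE hne') /= in h1.
have h2 : (p * j'.+1 <= p * c)%N by rewrite leq_pmul2l.
rewrite mulnS in h2; lia.
Qed.

End Lucas.

Lemma fact_ndvd p b : prime p -> b < p -> ~~ (p %| b`!).
Proof.
move=> pP; elim: b => [|b IH] hb; first by rewrite fact0 dvdn1; case: eqP pP => // ->.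
rewrite factS Euclid_dvdM // negb_or IH ?(ltnW hb) // andbT.
by apply/negP => /(dvdn_leq (ltn0Sn b)); rewrite leqNgt hb.
Qed.

Lemma lucas_dvd p a b c d : prime p -> b < p -> d < p ->
  (p %| 'C(p * a + b, p * c + d)) = (b < d) || (p %| 'C(a, c)).
Proof.
move=> pP bp dp.
have chP := pchar_Fp pP.
rewrite !(GRing.dvdn_pcharf chP) lucasF // GRing.mulf_eq0 -!(GRing.dvdn_pcharf chP) orbC.
congr (_ || _).
case: (ltnP b d) => hbd; first by rewrite bin_small // dvdn0.
apply/negbTE/negP => hC.
have := bin_fact hbd; move=> e.
have : p %| b`! by rewrite -e dvdn_mulr.
by apply/negP; apply: fact_ndvd.
Qed.

Definition nd p n M par := \sum_(0 <= k < M) ((odd k == par) && ~~ (p %| 'C(n, k)) : nat).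
Definition cp b q := \sum_(0 <= d < b.+1) ((odd d == q) : nat).

Lemma big_shift (F : nat -> nat) m n :
  \sum_(m <= i < m + n) F i = \sum_(0 <= i < n) F (i + m).
Proof. by rewrite -{1}[m]add0n big_addn addKn. Qed.

Lemma nd_ext p n M par : n < M -> nd p n M par = nd p n n.+1 par.
Proof.
move=> hM; rewrite /nd (big_cat_nat _ (n := n.+1)) //= [X in _ + X]big1_seq ?addn0 //.
move=> k /andP [_]; rewrite mem_index_iota => /andP [hk _].
by rewrite bin_small // dvdn0 andbF.
Qed.

Lemma cp_eq b : cp b false = cp b true + ~~ odd b.
Proof.
elim: b => [|b IH]; first by rewrite /cp !big_nat1.
rewrite /cp !(big_nat_recr b.+1) //= -/(cp b false) -/(cp b true) IH.
by case: (odd b).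
Qed.

Lemma inner p b o par : b < p ->
  \sum_(0 <= i < p) ((odd i (+) o == par) && (i <= b) : nat) = cp b (par (+) o).
Proof.
move=> hb; rewrite (big_cat_nat _ (n := b.+1)) //= [X in _ + X]big1_seq ?addn0.
  apply: eq_big_nat => i /andP [_ hi]; rewrite ltnS in hi; rewrite hi andbT.
  by case: (odd i); case: o; case: par.
move=> k /andP [_]; rewrite mem_index_iota => /andP [hk _].
by rewrite leqNgt hk andbF.
Qed.

Lemma nd_rec p a b par : prime p -> odd p -> b < p -> forall M,
  nd p (p * a + b) (p * M) par =
  nd p a M par * cp b false + nd p a M (~~ par) * cp b true.
Proof.
move=> pP po hb; elim => [|M IH]; first by rewrite muln0 /nd !big_geq.
rewrite mulnS [p + _]addnC.
have E1 : nd p (p * a + b) (p * M + p) par = nd p (p * a + b) (p * M) par +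
   \sum_(p * M <= i < p * M + p) ((odd i == par) && ~~ (p %| 'C(p * a + b, i)) : nat).
  by rewrite /nd (big_cat_nat _ (n := p * M)) ?leq_addr.
have E2 : forall q, nd p a M.+1 q = nd p a M q + ((odd M == q) && ~~ (p %| 'C(a, M)) : nat).
  by move=> q; rewrite /nd big_nat_recr.
rewrite E1 !E2 IH big_shift !mulnDl -!addnA; congr (_ + _).
rewrite addnCA; congr (_ + _).
have -> : \sum_(0 <= i < p) ((odd (i + p * M) == par) && ~~ (p %| 'C(p * a + b, i + p * M)) : nat)
   = \sum_(0 <= i < p) (((odd i (+) odd M == par) && (i <= b)) && ~~ (p %| 'C(a, M)) : nat).
  apply: eq_big_nat => i /andP [_ hi].
  rewrite addnC lucas_dvd // oddD oddM po /= negb_or -leqNgt andbA.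
  by rewrite addbC.
case: (p %| 'C(a, M)) => /=.
  by rewrite !andbF big1 // => i _; rewrite andbF.
under eq_bigr do rewrite andbT.
rewrite inner // !andbT.
case: (odd M); case: (par) => /=.
all: by rewrite ?mul1n ?mul0n ?addn0 ?add0n.

Qed.

Lemma nd_main p n : prime p -> odd p ->
  nd p n n.+1 false = nd p n n.+1 true + (if odd n then 0 else ~~ (p %| 'C(n, n./2))).
Proof.
move=> pP po; elim/ltn_ind: n => n IH.
have p1 := prime_gt1 pP; have p0 := prime_gt0 pP.
case: (posnP n) => [->|n0].
  rewrite /nd big_nat1 /= bin0 dvdn1.
  by rewrite big_nat1.
set a := n %/ p; set b := n %% p.
have hn : n = p * a + b by rewrite mulnC -divn_eq.
have hb : b < p by rewrite ltn_pmod.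
have ha : a < n by apply: ltn_Pdiv.
clearbody a b.
have Hrec q : nd p n n.+1 q = nd p a a.+1 q * cp b false + nd p a a.+1 (~~ q) * cp b true.
  have := @nd_rec p a b q pP po hb a.+1; rewrite -hn => <-.
  by symmetry; apply: nd_ext; rewrite {1}hn mulnS; lia.
have Hodd : odd n = odd a (+) odd b by rewrite hn oddD oddM po.
have IHa := IH a ha.
rewrite !Hrec cp_eq Hodd.
have ea := odd_double_half a; have eb := odd_double_half b; have ep := odd_double_half p.
rewrite po in ep.
case ob: (odd b) => /=.
- rewrite addn0 addbT.
  case oa: (odd a) => /=; last by lia.
  suff -> : p %| 'C(n, n./2) by rewrite addn0 addnC.
  rewrite oa in ea; rewrite ob in eb.
  have hpa : p * a = (p * a./2).*2 + p by rewrite -{1}ea -!mul2n; nia.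
  have -> : n./2 = p * a./2 + (p./2 + b./2 + 1).
    have -> : n = (p * a./2 + (p./2 + b./2 + 1)).*2 by rewrite hn hpa; lia.
    by rewrite doubleK.
  rewrite hn lucas_dvd //; [apply/orP; left|]; lia.
- rewrite addn1 addbF.
  case oa: (odd a) => /=.
    rewrite oa /= addn0 in IHa; rewrite IHa; lia.
  rewrite oa in IHa; rewrite IHa.
  rewrite oa in ea; rewrite ob in eb.
  have hpa : p * a = (p * a./2).*2 by rewrite -{1}ea -!mul2n; nia.
  have -> : 'C(n, n./2) = 'C(p * a + b, p * a./2 + b./2).
    have -> : n./2 = p * a./2 + b./2.
      have -> : n = (p * a./2 + b./2).*2 by rewrite hn hpa; lia.
      by rewrite doubleK.
    by rewrite -hn.
  rewrite lucas_dvd //; last lia.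
  have -> : (b < b./2) = false by lia.
  rewrite /=.
  nia.
Qed.

Lemma sym_sum (F : nat -> nat) N :
  (forall i, i <= N.*2 -> F (N.*2 - i) = F i) ->
  \sum_(0 <= k < (N.*2).+1) F k = (\sum_(0 <= k < N) F k).*2 + F N.
Proof.
move=> hF.
rewrite (big_cat_nat _ (n := N.+1)) //=; last by lia.
rewrite big_nat_recr //=.
have -> : (N.*2).+1 = N.+1 + N by lia.
rewrite big_shift big_nat_rev /=.
rewrite -addnn -addnA [F N + _]addnC addnA; congr (_ + _).
congr (_ + _); apply: eq_big_nat => i /andP [_ hi].
rewrite -hF; last by lia.
congr F; lia.
Qed.

Lemma count_sum (T : Type) (P : pred T) s : count P s = \sum_(x <- s) P x.
Proof. by elim: s => [|x s IH]; rewrite ?big_nil ?big_cons //= IH. Qed.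

Definition G p n M par := \sum_(0 <= k < M) ((odd k == par) && (p %| 'C(n, k)) : nat).

Lemma cnt_G p n m par : cnt_div p n m par = G p n m.+1 par.
Proof. by rewrite /cnt_div count_sum /G /index_iota subn0. Qed.

Lemma G_nd p n M par : G p n M par + nd p n M par = \sum_(0 <= k < M) ((odd k == par) : nat).
Proof.
rewrite /G /nd -big_split /=; apply: eq_bigr => k _.
by case: (odd k == par); case: (p %| 'C(n, k)).
Qed.

Lemma G_full p N par :
  G p N.*2 (N.*2).+1 par = (G p N.*2 N par).*2 + ((odd N == par) && (p %| 'C(N.*2, N))).
Proof.
rewrite /G sym_sum // => i hi.
by rewrite bin_sub // oddN // odd_double.
Qed.

Lemma G_full' p n N par : n = N.*2 ->
  G p n n.+1 par = (G p n N par).*2 + ((odd N == par) && (p %| 'C(n, N))).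
Proof. by move=> ->; apply: G_full. Qed.

Lemma GS p n M par : G p n M.+1 par = G p n M par + ((odd M == par) && (p %| 'C(n, M))).
Proof. by rewrite /G big_nat_recr. Qed.

Theorem lemma1p2 (n p : nat) (Hn : 0 < n) (Hp : prime p) (Hodd : odd p) :
  (4 %| n ->
     cnt_div p n (n %/ 2 - 2) false = cnt_div p n (n %/ 2 - 1) true) /\
  (n %% 4 = 2 ->
     cnt_div p n (n %/ 2 - 1) false = cnt_div p n (n %/ 2) true).
Proof.
have [N hN] : exists N, N = n./2 by eexists.
have Hkey : odd n = false -> 
  (G p n N false).*2 + (~~ odd N && (p %| 'C(n, N))) + ~~ (p %| 'C(n, N)) =
  (G p n N true).*2 + (odd N && (p %| 'C(n, N))) + 1.
  move=> ev.
  have hn : n = N.*2 by rewrite hN -{1}(odd_double_half n) ev.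
  have := nd_main n Hp Hodd; rewrite ev -hN.
  have := G_nd p n n.+1 false; have := G_nd p n n.+1 true.
  rewrite -/(cp n false) -/(cp n true) cp_eq ev.
  rewrite !(G_full' p false hn) !(G_full' p true hn).
  case: (odd N); case: (p %| 'C(n, N)) => /=; lia.
rewrite !cnt_G divn2 -hN.
split.
- move=> h4.
  have ev : odd n = false by apply/negbTE; rewrite -dvdn2; apply: dvdn_trans h4.
  have := Hkey ev.
  have eN : odd N = false by lia.
  have N2 : 2 <= N by lia.
  have -> : (N - 2).+1 = N.-1 by lia.
  have -> : (N - 1).+1 = N by lia.
  have := GS p n N.-1 false; rewrite prednK; last by lia.
  have -> : odd N.-1 = true by lia.
  rewrite eN /=.
  move=> ->.
  case: (p %| 'C(n, N)) => /=; lia.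
- move=> h2.
  have ev : odd n = false by lia.
  have := Hkey ev.
  have eN : odd N = true by lia.
  have N1 : 1 <= N by lia.
  have -> : (N - 1).+1 = N by lia.
  rewrite GS eN /=.
  case: (p %| 'C(n, N)) => /=; lia.
Qed.
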